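(* Let $\mathfrak{n}$ be the real $7$-dimensional Lie algebra with basis $e_1,\dots,e_7$ whose nonzero brackets (up to antisymmetry) are $[e_1,e_2]=e_5$, $[e_1,e_3]=e_6$, $[e_1,e_4]=2e_7$, $[e_2,e_3]=e_4$, $[e_2,e_6]=e_7$, $[e_3,e_5]=-e_7$, $[e_3,e_6]=e_7$. Then $\mathfrak{n}$ is not an Einstein nilradical.
   Context: A real nilpotent Lie algebra $\mathfrak{n}$ is called an Einstein nilradical if it admits an inner product such that the left-invariant Riemannian metric it defines on the simply connected nilpotent Lie group with Lie algebra $\mathfrak{n}$ is a nilsoliton, i.e. its Ricci operator satisfies $\mathrm{Ric}=c\,\mathrm{Id}+D$ for some $c\in\mathbb{R}$ and some derivation $D$ of $\mathfrak{n}$. Brackets of basis elements not listed are zero. *)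

(* Defs.v *)
From mathcomp Require Import all_boot all_order all_algebra.
From mathcomp Require Import reals.
Set Implicit Arguments. Unset Strict Implicit. Unset Printing Implicit Defensive.
Import Order.TTheory GRing.Theory Num.Theory.
Local Open Scope ring_scope.

Section LieDefs.
Variable R : realType.
Variable n : nat.

(* Bracket on R^n determined by the brackets of the standard basis vectors:
   c i j = [e_i, e_j]. *)
Definition bracket_of (c : 'I_n -> 'I_n -> 'cV[R]_n) (x y : 'cV[R]_n) : 'cV[R]_n :=
  \sum_(i < n) \sum_(j < n) (x i 0 * y j 0) *: c i j.

Definition derivation (br : 'cV[R]_n -> 'cV[R]_n -> 'cV[R]_n) (D : 'M[R]_n) : Prop :=
  forall x y, D *m br x y = br (D *m x) y + br x (D *m y).

(* The inner product for which the columns of the invertible matrix B form an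
   orthonormal basis; every inner product on R^n is of this form. *)
Definition ip (B : 'M[R]_n) (x y : 'cV[R]_n) : R :=
  ((invmx B *m x)^T *m (invmx B *m y)) 0 0.

(* Ricci form of the left-invariant metric defined by ip B on the simply
   connected nilpotent Lie group with Lie algebra (R^n, br), computed with the
   orthonormal basis X_i = col i B:
   <Ric x, y> = -1/2 sum_{i,j} <[x,X_i],X_j><[y,X_i],X_j>
                + 1/4 sum_{i,j} <[X_i,X_j],x><[X_i,X_j],y>. *)
Definition ricci_form (br : 'cV[R]_n -> 'cV[R]_n -> 'cV[R]_n) (B : 'M[R]_n)
    (x y : 'cV[R]_n) : R :=
  - (1 / 2) * (\sum_(i < n) \sum_(j < n)
       ip B (br x (col i B)) (col j B) * ip B (br y (col i B)) (col j B))
  + (1 / 4) * (\sum_(i < n) \sum_(j < n)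
       ip B (br (col i B) (col j B)) x * ip B (br (col i B) (col j B)) y).

Definition is_ricci_operator (br : 'cV[R]_n -> 'cV[R]_n -> 'cV[R]_n) (B : 'M[R]_n)
    (Ric : 'M[R]_n) : Prop :=
  forall x y, ip B (Ric *m x) y = ricci_form br B x y.

Definition nilsoliton (br : 'cV[R]_n -> 'cV[R]_n -> 'cV[R]_n) (B : 'M[R]_n) : Prop :=
  exists (c : R) (D : 'M[R]_n),
    derivation br D /\ is_ricci_operator br B (c%:M + D).

Definition einstein_nilradical (br : 'cV[R]_n -> 'cV[R]_n -> 'cV[R]_n) : Prop :=
  exists B : 'M[R]_n, B \in unitmx /\ nilsoliton br B.

End LieDefs.

(* Standard basis vector e_(k+1) of R^7 (0-based index k). *)
Definition ev (R : realType) (k : nat) : 'cV[R]_7 := delta_mx (inord k) 0.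

Definition n7_const (R : realType) (i j : 'I_7) : 'cV[R]_7 :=
  match nat_of_ord i, nat_of_ord j with
  | 0, 1 => ev R 4   | 1, 0 => - ev R 4
  | 0, 2 => ev R 5   | 2, 0 => - ev R 5
  | 0, 3 => 2%:R *: ev R 6 | 3, 0 => - (2%:R *: ev R 6)
  | 1, 2 => ev R 3   | 2, 1 => - ev R 3
  | 1, 5 => ev R 6   | 5, 1 => - ev R 6
  | 2, 4 => - ev R 6 | 4, 2 => ev R 6
  | 2, 5 => ev R 6   | 5, 2 => - ev R 6
  | _, _ => 0
  end.

Definition n7_bracket (R : realType) : 'cV[R]_7 -> 'cV[R]_7 -> 'cV[R]_7 :=
  bracket_of (@n7_const R).

(* Main.v *)
Require Import Defs.
From mathcomp Require Import all_boot all_order all_algebra.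
From mathcomp Require Import reals.
From mathcomp Require Import ring lra.
From Stdlib Require Import FunctionalExtensionality.
Set Implicit Arguments. Unset Strict Implicit. Unset Printing Implicit Defensive.
Import Order.TTheory GRing.Theory Num.Theory.
Local Open Scope ring_scope.

Section Gen.
Variable R : realType.
Variable n : nat.
Notation I := 'I_n.
Definition tens := I -> I -> I -> R.

Definition act1 (A : 'M[R]_n) (S : tens) : tens := fun i j k => \sum_m A m i * S m j k.
Definition act2 (A : 'M[R]_n) (S : tens) : tens := fun i j k => \sum_m A m j * S i m k.
Definition act3 (A : 'M[R]_n) (S : tens) : tens := fun i j k => \sum_m A k m * S i j m.
Definition tsub (S U : tens) : tens := fun i j k => S i j k - U i j k.
Definition tzero : tens := fun _ _ _ => 0.
Definition piA (A : 'M[R]_n) (S : tens) : tens := tsub (tsub (act3 A S) (act1 A S)) (act2 A S).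
Definition tdot (S U : tens) : R := \sum_i \sum_j \sum_k S i j k * U i j k.

Lemma act1_sub A S U : act1 A (tsub S U) = tsub (act1 A S) (act1 A U).
Proof. apply: functional_extensionality_dep => i; apply: functional_extensionality_dep => j; apply: functional_extensionality_dep => k.
by rewrite /act1 /tsub -sumrB; apply: eq_bigr => m _; rewrite mulrBr. Qed.
Lemma act2_sub A S U : act2 A (tsub S U) = tsub (act2 A S) (act2 A U).
Proof. apply: functional_extensionality_dep => i; apply: functional_extensionality_dep => j; apply: functional_extensionality_dep => k.
by rewrite /act2 /tsub -sumrB; apply: eq_bigr => m _; rewrite mulrBr. Qed.
Lemma act3_sub A S U : act3 A (tsub S U) = tsub (act3 A S) (act3 A U).
Proof. apply: functional_extensionality_dep => i; apply: functional_extensionality_dep => j; apply: functional_extensionality_dep => k.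
by rewrite /act3 /tsub -sumrB; apply: eq_bigr => m _; rewrite mulrBr. Qed.

Ltac fx := apply: functional_extensionality_dep => i; apply: functional_extensionality_dep => j; apply: functional_extensionality_dep => k.

Lemma act1_zero A : act1 A tzero = tzero.
Proof. fx; rewrite /act1 /tzero; apply: big1 => m _; exact: mulr0. Qed.
Lemma act2_zero A : act2 A tzero = tzero.
Proof. fx; rewrite /act2 /tzero; apply: big1 => m _; exact: mulr0. Qed.
Lemma act3_zero A : act3 A tzero = tzero.
Proof. fx; rewrite /act3 /tzero; apply: big1 => m _; exact: mulr0. Qed.

Lemma act1M A B S : act1 A (act1 B S) = act1 (B *m A) S.
Proof.
fx; rewrite /act1.
under eq_bigr => m _ do rewrite big_distrr.
rewrite exchange_big; apply: eq_bigr => l _.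
by rewrite mxE big_distrl; apply: eq_bigr => m _ /=; rewrite mulrA [A m i * _]mulrC.
Qed.
Lemma act2M A B S : act2 A (act2 B S) = act2 (B *m A) S.
Proof.
fx; rewrite /act2.
under eq_bigr => m _ do rewrite big_distrr.
rewrite exchange_big; apply: eq_bigr => l _.
by rewrite mxE big_distrl; apply: eq_bigr => m _ /=; rewrite mulrA [A m j * _]mulrC.
Qed.
Lemma act3M A B S : act3 A (act3 B S) = act3 (A *m B) S.
Proof.
fx; rewrite /act3.
under eq_bigr => m _ do rewrite big_distrr.
rewrite exchange_big; apply: eq_bigr => l _.
by rewrite mxE big_distrl; apply: eq_bigr => m _ /=; rewrite mulrA.
Qed.

Lemma act12 A B S : act1 A (act2 B S) = act2 B (act1 A S).
Proof.
fx; rewrite /act1 /act2.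
under eq_bigr => m _ do rewrite big_distrr.
rewrite exchange_big; apply: eq_bigr => l _.
rewrite big_distrr; apply: eq_bigr => m _ /=; rewrite !mulrA; congr (_ * _); exact: mulrC.
Qed.
Lemma act13 A B S : act1 A (act3 B S) = act3 B (act1 A S).
Proof.
fx; rewrite /act1 /act3.
under eq_bigr => m _ do rewrite big_distrr.
rewrite exchange_big; apply: eq_bigr => l _.
rewrite big_distrr; apply: eq_bigr => m _ /=; rewrite !mulrA; congr (_ * _); exact: mulrC.
Qed.
Lemma act23 A B S : act2 A (act3 B S) = act3 B (act2 A S).
Proof.
fx; rewrite /act2 /act3.
under eq_bigr => m _ do rewrite big_distrr.
rewrite exchange_big; apply: eq_bigr => l _.
rewrite big_distrr; apply: eq_bigr => m _ /=; rewrite !mulrA; congr (_ * _); exact: mulrC.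
Qed.

Lemma act1B A B S : act1 (A - B) S = tsub (act1 A S) (act1 B S).
Proof. fx; rewrite /act1 /tsub -sumrB; apply: eq_bigr => m _; by rewrite !mxE mulrBl. Qed.
Lemma act2B A B S : act2 (A - B) S = tsub (act2 A S) (act2 B S).
Proof. fx; rewrite /act2 /tsub -sumrB; apply: eq_bigr => m _; by rewrite !mxE mulrBl. Qed.
Lemma act3B A B S : act3 (A - B) S = tsub (act3 A S) (act3 B S).
Proof. fx; rewrite /act3 /tsub -sumrB; apply: eq_bigr => m _; by rewrite !mxE mulrBl. Qed.

Lemma pi_comm A B S :
  piA (A *m B - B *m A) S = tsub (piA A (piA B S)) (piA B (piA A S)).
Proof.
rewrite /piA !(act1_sub, act2_sub, act3_sub, act1B, act2B, act3B, act1M, act2M, act3M).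
rewrite -!act12 -!act13 -!act23.
fx; rewrite /tsub /act1 /act2 /act3 /=.
set a1 := \sum_(m < n) (B *m A) m i * S m j k.
ring.
Qed.

Lemma tdot_sub S S' U : tdot (tsub S S') U = tdot S U - tdot S' U.
Proof.
rewrite /tdot -sumrB; apply: eq_bigr => i _; rewrite -sumrB; apply: eq_bigr => j _.
rewrite -sumrB; apply: eq_bigr => k _; by rewrite /tsub mulrBl.
Qed.
Lemma tdot_subr S U U' : tdot S (tsub U U') = tdot S U - tdot S U'.
Proof.
rewrite /tdot -sumrB; apply: eq_bigr => i _; rewrite -sumrB; apply: eq_bigr => j _.
rewrite -sumrB; apply: eq_bigr => k _; by rewrite /tsub mulrBr.
Qed.
Lemma tdot_zero U : tdot tzero U = 0.
Proof. rewrite /tdot; apply: big1 => i _; apply: big1 => j _; apply: big1 => k _; exact: mul0r. Qed.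
Lemma tdotC S U : tdot S U = tdot U S.
Proof. rewrite /tdot; apply: eq_bigr => i _; apply: eq_bigr => j _; apply: eq_bigr => k _; exact: mulrC. Qed.

Lemma act3_adj A S U : tdot (act3 A S) U = tdot S (act3 A^T U).
Proof.
rewrite /tdot /act3; apply: eq_bigr => i _; apply: eq_bigr => j _.
under eq_bigr => k _ do rewrite big_distrl.
under [RHS]eq_bigr => k _ do rewrite big_distrr.
rewrite exchange_big; apply: eq_bigr => k _; apply: eq_bigr => m _ /=.
rewrite mxE; ring.
Qed.

Lemma mv3 (G : I -> I -> I -> R) :
  \sum_j \sum_k \sum_m G j k m = \sum_m \sum_j \sum_k G j k m.
Proof.
under eq_bigr => j _ do rewrite exchange_big.
by rewrite [LHS]exchange_big.
Qed.

Lemma sw14 (F : I -> I -> I -> I -> R) :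
  \sum_i \sum_j \sum_k \sum_m F i j k m = \sum_m \sum_j \sum_k \sum_i F i j k m.
Proof.
under eq_bigr => i _ do rewrite mv3.
rewrite [LHS]exchange_big; apply: eq_bigr => m _.
by rewrite mv3.
Qed.

Lemma act1_adj A S U : tdot (act1 A S) U = tdot S (act1 A^T U).
Proof.
rewrite /tdot /act1.
transitivity (\sum_i \sum_j \sum_k \sum_m A m i * S m j k * U i j k).
  apply: eq_bigr => i _; apply: eq_bigr => j _; apply: eq_bigr => k _; by rewrite big_distrl.
rewrite sw14.
apply: eq_bigr => i _; apply: eq_bigr => j _; apply: eq_bigr => k _.
rewrite big_distrr; apply: eq_bigr => m _ /=; rewrite mxE; ring.
Qed.

Lemma act2_adj A S U : tdot (act2 A S) U = tdot S (act2 A^T U).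
Proof.
rewrite /tdot /act2; apply: eq_bigr => i _.
transitivity (\sum_j \sum_k \sum_m A m j * S i m k * U i j k).
  apply: eq_bigr => j _; apply: eq_bigr => k _; by rewrite big_distrl.
transitivity (\sum_m \sum_k \sum_j A m j * S i m k * U i j k).
  rewrite mv3; apply: eq_bigr => m _.
  by rewrite exchange_big.
apply: eq_bigr => j _; apply: eq_bigr => k _.
rewrite big_distrr; apply: eq_bigr => m _ /=; rewrite mxE; ring.
Qed.

Lemma pi_adj A S U : tdot (piA A S) U = tdot S (piA A^T U).
Proof. by rewrite /piA !(tdot_sub, tdot_subr) act1_adj act2_adj act3_adj. Qed.

Lemma pi_zero A : piA A tzero = tzero.
Proof. by rewrite /piA act1_zero act2_zero act3_zero; fx; rewrite /tsub /tzero !subr0. Qed.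

Lemma pi_key P T : piA P T = tzero ->
  tdot (piA (P *m P^T - P^T *m P) T) T = tdot (piA P^T T) (piA P^T T).
Proof.
move=> hP; rewrite pi_comm tdot_sub hP pi_zero tdot_zero subr0.
by rewrite pi_adj.
Qed.

Lemma mv3' (G : I -> I -> I -> R) :
  \sum_a \sum_b \sum_c G a b c = \sum_b \sum_c \sum_a G a b c.
Proof. by rewrite (mv3 (fun b c a => G a b c)). Qed.

Lemma mv4' (F : I -> I -> I -> I -> R) :
  \sum_a \sum_b \sum_c \sum_d F a b c d = \sum_b \sum_c \sum_d \sum_a F a b c d.
Proof.
rewrite [LHS]exchange_big; apply: eq_bigr => b _.
exact: (mv3' (fun a c d => F a b c d)).
Qed.

Definition ricF (T : tens) (a b : I) : R :=
  - (1 / 2) * (\sum_i \sum_j T a i j * T b i j)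
  + (1 / 4) * (\sum_i \sum_j T i j a * T i j b).

Lemma moment_map (T : tens) (A : 'M[R]_n) :
  (forall i j k, T j i k = - T i j k) ->
  \sum_a \sum_b ricF T a b * A b a = (1 / 4) * tdot (piA A T) T.
Proof.
move=> hT.
have h2 : tdot (act2 A T) T = tdot (act1 A T) T.
  rewrite /tdot /act1 /act2.
  transitivity (\sum_i \sum_j \sum_k \sum_m A m j * T m i k * T j i k).
    apply: eq_bigr => i _; apply: eq_bigr => j _; apply: eq_bigr => k _.
    rewrite big_distrl; apply: eq_bigr => m _ /=; rewrite (hT i m) (hT i j); ring.
  rewrite [LHS]exchange_big; apply: eq_bigr => i _; apply: eq_bigr => j _; apply: eq_bigr => k _.
  by rewrite big_distrl.
have h1 : \sum_a \sum_b (\sum_i \sum_j T a i j * T b i j) * A b a = tdot (act1 A T) T.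
  rewrite /tdot /act1.
  transitivity (\sum_a \sum_b \sum_i \sum_j T a i j * T b i j * A b a).
    apply: eq_bigr => a _; apply: eq_bigr => b _; rewrite big_distrl; apply: eq_bigr => i _.
    by rewrite big_distrl.
  apply: eq_bigr => a _; rewrite mv3'; apply: eq_bigr => i _; apply: eq_bigr => j _.
  rewrite big_distrl; apply: eq_bigr => m _ /=; ring.
have h3 : \sum_a \sum_b (\sum_i \sum_j T i j a * T i j b) * A b a = tdot (act3 A T) T.
  rewrite /tdot /act3.
  transitivity (\sum_a \sum_b \sum_i \sum_j T i j a * T i j b * A b a).
    apply: eq_bigr => a _; apply: eq_bigr => b _; rewrite big_distrl; apply: eq_bigr => i _.
    by rewrite big_distrl.
  rewrite [LHS]exchange_big mv4' mv4'.
  apply: eq_bigr => i _; apply: eq_bigr => j _; apply: eq_bigr => k _.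
  rewrite big_distrl; apply: eq_bigr => m _ /=; ring.
rewrite /piA !tdot_sub h2 -h1 -h3.
rewrite /ricF.
transitivity (\sum_a \sum_b (- (1 / 2) * ((\sum_i \sum_j T a i j * T b i j) * A b a)
    + (1 / 4) * ((\sum_i \sum_j T i j a * T i j b) * A b a))).
  apply: eq_bigr => a _; apply: eq_bigr => b _; ring.
under eq_bigr => a _ do rewrite big_split /= -!big_distrr /=.
rewrite big_split /= -!big_distrr /=.
set X := \sum_a \sum_b (\sum_i \sum_j T a i j * T b i j) * A b a. set Y := \sum_a \sum_b (\sum_i \sum_j T i j a * T i j b) * A b a. by field.
Qed.
End Gen.

Section Frame.
Variable R : realType.
Variable n : nat.
Variable cst : 'I_n -> 'I_n -> 'cV[R]_n.
Notation br := (bracket_of cst).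

Lemma mul_sum_col (B : 'M[R]_n) (v : 'cV[R]_n) : B *m v = \sum_m v m 0 *: col m B.
Proof.
apply/matrixP => i j; rewrite !mxE summxE; apply: eq_bigr => m _.
by rewrite !mxE (ord1 j) mulrC.
Qed.

Lemma brL (a : 'I_n -> R) (v : 'I_n -> 'cV[R]_n) y :
  br (\sum_m a m *: v m) y = \sum_m a m *: br (v m) y.
Proof.
rewrite /bracket_of.
under eq_bigr => i _ do [under eq_bigr => j _ do rewrite summxE mulr_suml scaler_suml; rewrite exchange_big].
rewrite exchange_big; apply: eq_bigr => m _.
rewrite scaler_sumr; apply: eq_bigr => i _; rewrite scaler_sumr; apply: eq_bigr => j _.
by rewrite !mxE scalerA mulrA.
Qed.

Lemma brR (a : 'I_n -> R) (v : 'I_n -> 'cV[R]_n) x :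
  br x (\sum_m a m *: v m) = \sum_m a m *: br x (v m).
Proof.
rewrite /bracket_of.
under eq_bigr => i _ do [under eq_bigr => j _ do rewrite summxE mulr_sumr scaler_suml; rewrite exchange_big].
rewrite exchange_big; apply: eq_bigr => m _.
rewrite scaler_sumr; apply: eq_bigr => i _; rewrite scaler_sumr; apply: eq_bigr => j _.
rewrite !mxE scalerA; congr (_ *: _); ring.
Qed.

Lemma br_antisym : (forall i j, cst j i = - cst i j) -> forall x y, br y x = - br x y.
Proof.
move=> h x y; rewrite /bracket_of exchange_big -sumrN; apply: eq_bigr => i _.
rewrite -sumrN; apply: eq_bigr => j _; by rewrite h scalerN mulrC.
Qed.

Definition defect (Y : 'M[R]_n) (x y : 'cV[R]_n) : 'cV[R]_n :=
  Y *m br x y - (br (Y *m x) y + br x (Y *m y)).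

Lemma defect_der Y : derivation br Y -> forall x y, defect Y x y = 0.
Proof. by move=> h x y; rewrite /defect h subrr. Qed.

Lemma mul_lin (Y : 'M[R]_n) (a : 'I_n -> R) (w : 'I_n -> 'cV[R]_n) :
  Y *m (\sum_m a m *: w m) = \sum_m a m *: (Y *m w m).
Proof. rewrite mulmx_sumr; apply: eq_bigr => m _; by rewrite scalemxAr. Qed.

Lemma defectL Y (a : 'I_n -> R) (v : 'I_n -> 'cV[R]_n) y :
  defect Y (\sum_m a m *: v m) y = \sum_m a m *: defect Y (v m) y.
Proof.
rewrite /defect (mul_lin Y a v) !brL (mul_lin Y a (fun m => br (v m) y)).
rewrite -big_split -sumrB; apply: eq_bigr => m _ /=.
by rewrite scalerBr scalerDr.
Qed.

Lemma defectR Y (a : 'I_n -> R) (v : 'I_n -> 'cV[R]_n) x :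
  defect Y x (\sum_m a m *: v m) = \sum_m a m *: defect Y x (v m).
Proof.
rewrite /defect (mul_lin Y a v) !brR (mul_lin Y a (fun m => br x (v m))).
rewrite -big_split -sumrB; apply: eq_bigr => m _ /=.
by rewrite scalerBr scalerDr.
Qed.

Variable B : 'M[R]_n.
Hypothesis hB : B \in unitmx.
Notation g := (invmx B).

Lemma gB : g *m B = 1%:M. Proof. exact: mulVmx. Qed.
Lemma Bg : B *m g = 1%:M. Proof. exact: mulmxV. Qed.

Lemma g_col j : g *m col j B = delta_mx j 0.
Proof. by rewrite colE mulmxA gB mul1mx. Qed.

Lemma ip_col x j : ip B x (col j B) = (g *m x) j 0.
Proof. by rewrite /ip g_col -colE !mxE. Qed.

Definition Tf (i j k : 'I_n) : R := (g *m br (col i B) (col j B)) k 0.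

Lemma ricci_frame Ric : is_ricci_operator br B Ric ->
  forall a b, (g *m Ric *m B) b a = ricF Tf a b.
Proof.
move=> H a b; have := H (col a B) (col b B).
have -> : ricci_form br B (col a B) (col b B) = ricF Tf a b.
  rewrite /ricci_form /ricF; congr (_ * _ + _ * _); apply: eq_bigr => i _; apply: eq_bigr => j _.
    by rewrite !ip_col.
  by rewrite !ip_col.
rewrite ip_col colE !mulmxA -colE mxE => <-.
by [].
Qed.

Lemma Tf_antisym : (forall i j, cst j i = - cst i j) -> forall i j k, Tf j i k = - Tf i j k.
Proof. by move=> h i j k; rewrite /Tf br_antisym // mulmxN mxE. Qed.

Lemma ricF_sym (T : tens R n) a b : ricF T a b = ricF T b a.
Proof.
rewrite /ricF; congr (_ * _ + _ * _); apply: eq_bigr => i _; apply: eq_bigr => j _; exact: mulrC.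
Qed.

Lemma trace_mul (M A : 'M[R]_n) : \tr (M *m A) = \sum_a \sum_b M a b * A b a.
Proof. by rewrite /mxtrace; apply: eq_bigr => a _; rewrite mxE. Qed.

Lemma key_trace Ric A : is_ricci_operator br B Ric -> (forall i j, cst j i = - cst i j) ->
  \tr ((g *m Ric *m B) *m A) = (1 / 4) * tdot (piA A Tf) Tf.
Proof.
move=> H h; rewrite trace_mul -moment_map; last exact: Tf_antisym.
apply: eq_bigr => a _; apply: eq_bigr => b _.
by rewrite (ricci_frame H) ricF_sym.
Qed.

Lemma Ycol_sum Y i : Y *m col i B = \sum_m (g *m Y *m B) m i *: col m B.
Proof.
have -> : Y *m col i B = B *m col i (g *m Y *m B).
  by rewrite !colE !mulmxA Bg mul1mx.
rewrite mul_sum_col; apply: eq_bigr => m _; by rewrite mxE.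
Qed.

Lemma pi_frame Y i j k :
  piA (g *m Y *m B) Tf i j k = (g *m defect Y (col i B) (col j B)) k 0.
Proof.
rewrite /piA /tsub /act1 /act2 /act3 /defect.
have e3 : \sum_m (g *m Y *m B) k m * Tf i j m = (g *m (Y *m br (col i B) (col j B))) k 0.
  rewrite /Tf.
  have -> : g *m (Y *m br (col i B) (col j B)) = (g *m Y *m B) *m (g *m br (col i B) (col j B)).
    by rewrite !mulmxA -(mulmxA _ B) Bg mulmx1.
  by rewrite mxE.
have e1 : \sum_m (g *m Y *m B) m i * Tf m j k = (g *m br (Y *m col i B) (col j B)) k 0.
  rewrite Ycol_sum brL mul_lin summxE; apply: eq_bigr => l _.
  by rewrite /Tf !mxE.
have e2 : \sum_m (g *m Y *m B) m j * Tf i m k = (g *m br (col i B) (Y *m col j B)) k 0.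
  rewrite Ycol_sum brR mul_lin summxE; apply: eq_bigr => l _.
  by rewrite /Tf !mxE.
rewrite e1 e2 e3 !mulmxBr !mulmxDr !mxE.
ring.
Qed.

Lemma frame_zero Y : (forall i j k, piA (g *m Y *m B) Tf i j k = 0) ->
  forall x y, defect Y x y = 0.
Proof.
move=> h.
have h0 : forall i j, defect Y (col i B) (col j B) = 0.
  move=> i j; have e : g *m defect Y (col i B) (col j B) = 0.
    apply/matrixP => k l; rewrite (ord1 l) -pi_frame h mxE //.
  by rewrite -[defect _ _ _]mul1mx -Bg -mulmxA e mulmx0.
move=> x y.
have hx : x = \sum_l (g *m x) l 0 *: col l B by rewrite -mul_sum_col mulmxA Bg mul1mx.
have hy : y = \sum_l (g *m y) l 0 *: col l B by rewrite -mul_sum_col mulmxA Bg mul1mx.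
rewrite hx defectL.
apply: big1 => m _.
rewrite hy defectR.
rewrite big1 ?scaler0 // => l _.
by rewrite h0 scaler0.
Qed.

Lemma der_frame Y : (forall x y, defect Y x y = 0) ->
  forall i j k, piA (g *m Y *m B) Tf i j k = 0.
Proof. by move=> h i j k; rewrite pi_frame h mulmx0 mxE. Qed.

End Frame.

Section Extra.
Variable R : realType.
Variable n : nat.

Lemma mul_self_ge0 (x : R) : 0 <= x * x.
Proof. by rewrite -expr2 sqr_ge0. Qed.

Lemma mul_self_eq0 (x : R) : x * x = 0 -> x = 0.
Proof. by move/eqP; rewrite -expr2 sqrf_eq0 => /eqP. Qed.

Lemma tdot_ge0 (S : tens R n) : 0 <= tdot S S.
Proof.
rewrite /tdot; apply: sumr_ge0 => i _; apply: sumr_ge0 => j _; apply: sumr_ge0 => k _.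
exact: mul_self_ge0.
Qed.

Lemma tdot_eq0 (S : tens R n) : tdot S S = 0 -> forall i j k, S i j k = 0.
Proof.
move=> h i j k.
have h1 : \sum_j \sum_k S i j k * S i j k = 0.
  apply: (psumr_eq0P _ h) => // i0 _; apply: sumr_ge0 => j0 _; apply: sumr_ge0 => k0 _; exact: mul_self_ge0.
have h2 : \sum_k S i j k * S i j k = 0.
  apply: (psumr_eq0P _ h1) => // j0 _; apply: sumr_ge0 => k0 _; exact: mul_self_ge0.
have h3 : S i j k * S i j k = 0.
  apply: (psumr_eq0P _ h2) => // k0 _; exact: mul_self_ge0.
exact: mul_self_eq0.
Qed.

Lemma tdot_pz (S U : tens R n) : (forall i j k, S i j k = 0) -> tdot S U = 0.
Proof. move=> h; rewrite /tdot; apply: big1 => i _; apply: big1 => j _; apply: big1 => k _; by rewrite h mul0r. Qed.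

Lemma tr_TA_eq0 (A : 'M[R]_n) : \tr (A^T *m A) = 0 -> A = 0.
Proof.
move=> h; rewrite /mxtrace in h.
apply/matrixP => a b.
have hb : forall b, (A^T *m A) b b = \sum_a A a b * A a b.
  by move=> b0; rewrite mxE; apply: eq_bigr => m _; rewrite mxE.
have h2 : \sum_a A a b * A a b = 0.
  rewrite -hb; apply: (psumr_eq0P _ h) => // m _; rewrite hb; apply: sumr_ge0 => l _; exact: mul_self_ge0.
have h3 : A a b * A a b = 0.
  apply: (psumr_eq0P _ h2) => // m _; exact: mul_self_ge0.
by rewrite mxE; apply: mul_self_eq0.
Qed.

Lemma act1_one (S : tens R n) i j k : act1 1%:M S i j k = S i j k.
Proof.
rewrite /act1 (bigD1 i) //= big1 ?addr0 => [|m hm]; first by rewrite mxE eqxx mul1r.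
by rewrite mxE (negbTE hm) mul0r.
Qed.
Lemma act2_one (S : tens R n) i j k : act2 1%:M S i j k = S i j k.
Proof.
rewrite /act2 (bigD1 j) //= big1 ?addr0 => [|m hm]; first by rewrite mxE eqxx mul1r.
by rewrite mxE (negbTE hm) mul0r.
Qed.
Lemma act3_one (S : tens R n) i j k : act3 1%:M S i j k = S i j k.
Proof.
rewrite /act3 (bigD1 k) //= big1 ?addr0 => [|m hm]; first by rewrite mxE eqxx mul1r.
by rewrite mxE eq_sym (negbTE hm) mul0r.
Qed.

Lemma tdot_pi_one (S : tens R n) : tdot (piA 1%:M S) S = - tdot S S.
Proof.
rewrite /tdot -sumrN; apply: eq_bigr => i _; rewrite -sumrN; apply: eq_bigr => j _.
rewrite -sumrN; apply: eq_bigr => k _.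
rewrite /piA /tsub act1_one act2_one act3_one; ring.
Qed.

End Extra.

Section Spec.
Variable R : realType.
Lemma sum7 (F : 'I_7 -> R) : \sum_(i<7) F i =
  F (inord 0) + F (inord 1) + F (inord 2) + F (inord 3) + F (inord 4) + F (inord 5) + F (inord 6).
Proof.
rewrite (eq_bigr (fun i : 'I_7 => F (inord i))); last by move=> i _; rewrite inord_val.
by rewrite !big_ord_recr big_ord0 /= add0r.
Qed.

Definition xs (x : 'cV[R]_7) (i : nat) := x (inord i) 0.

Definition brc (x y : 'cV[R]_7) (k : nat) : R :=
  match k with
  | 3 => xs x 1 * xs y 2 - xs x 2 * xs y 1
  | 4 => xs x 0 * xs y 1 - xs x 1 * xs y 0
  | 5 => xs x 0 * xs y 2 - xs x 2 * xs y 0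
  | 6 => 2 * (xs x 0 * xs y 3 - xs x 3 * xs y 0) + (xs x 1 * xs y 5 - xs x 5 * xs y 1)
         - (xs x 2 * xs y 4 - xs x 4 * xs y 2) + (xs x 2 * xs y 5 - xs x 5 * xs y 2)
  | _ => 0
  end.

Lemma inord_eq (a b : nat) : (a < 7)%N -> (b < 7)%N -> ((inord a : 'I_7) == inord b) = (a == b).
Proof. by move=> ha hb; rewrite -val_eqE /= !inordK. Qed.

Lemma ord_inord_eq (k a : nat) (hk : (k < 7)%N) : (a < 7)%N ->
  ((Ordinal hk : 'I_7) == inord a) = (k == a).
Proof. by move=> ha; rewrite -val_eqE /= inordK. Qed.

Lemma br_coord (x y : 'cV[R]_7) (k : 'I_7) :
  n7_bracket x y k 0 = brc x y k.
Proof.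
rewrite /n7_bracket /bracket_of summxE sum7.
rewrite !summxE !sum7 !mxE.
rewrite /n7_const !inordK //=.
rewrite /ev /xs /brc.
case: k => k hk.
rewrite !mxE.
do 7 (case: k hk => [|k] hk; first by rewrite !ord_inord_eq //= ?inordK //= /xs; ring).
by [].
Qed.



Notation dft := (defect (@n7_const R)).
Definition e7 (i : nat) : 'cV[R]_7 := delta_mx (inord i) 0.
Notation "Y @ a , b" := (Y (inord a) (inord b)) (at level 10, a at level 8, b at level 8).

Lemma e7E i k : (i < 7)%N -> (k < 7)%N -> e7 i (inord k) 0 = (k == i)%:R.
Proof. by move=> hi hk; rewrite /e7 mxE inord_eq // andbT. Qed.

Lemma mulve (Y : 'M[R]_7) i k : (i < 7)%N -> (k < 7)%N -> (Y *m e7 i) (inord k) 0 = Y @ k, i.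
Proof. by move=> hi hk; rewrite /e7 -colE mxE. Qed.

Definition matf (t : nat -> R) (a b : nat) : R :=
 match a, b with
 | 0,0 => t 0%N | 1,1 => t 1%N | 2,2 => t 1%N | 3,3 => 2 * t 1%N
 | 4,4 => t 0%N + t 1%N | 5,5 => t 0%N + t 1%N | 6,6 => t 0%N + 2 * t 1%N
 | 1,2 => t 2%N | 4,5 => t 2%N
 | 3,0 => t 3%N | 4,0 => t 4%N | 4,2 => t 5%N | 5,0 => t 6%N | 5,1 => t 7%N | 5,2 => t 8%N
 | 6,3 => t 9%N | 6,4 => t 10%N | 6,5 => t 11%N
 | 6,0 => t 12%N | 6,1 => t 13%N | 6,2 => t 14%N
 | 3,2 => (t 6%N + t 11%N - t 4%N) / 2 | 3,1 => (t 6%N + t 10%N) / 2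
 | 4,1 => t 7%N - t 8%N + t 9%N
 | _,_ => 0 end.
Definition mat (t : nat -> R) : 'M[R]_7 := \matrix_(i, j) matf t i j.

Lemma matE t a b : (a < 7)%N -> (b < 7)%N -> mat t @ a, b = matf t a b.
Proof. by move=> ha hb; rewrite mxE !inordK. Qed.

Lemma mulmat_coord t (x : 'cV[R]_7) k : (k < 7)%N ->
  xs (mat t *m x) k = matf t k 0 * xs x 0 + matf t k 1 * xs x 1 + matf t k 2 * xs x 2
   + matf t k 3 * xs x 3 + matf t k 4 * xs x 4 + matf t k 5 * xs x 5 + matf t k 6 * xs x 6.
Proof. by move=> hk; rewrite /xs mxE sum7 !matE. Qed.

Lemma mat_der t x y : dft (mat t) x y = 0.
Proof.
apply/matrixP => k l; rewrite (ord1 l).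
case: k => k hk.
have -> : Ordinal hk = inord k by apply/val_inj; rewrite /= inordK.
rewrite /defect !mxE sum7 !br_coord !matE // !inordK //.
rewrite /brc !mulmat_coord //.
do 7 (case: k hk => [|k] hk; first by rewrite /matf /=; field).
by [].
Qed.

Lemma defE (Y : 'M[R]_7) i j k : (i < 7)%N -> (j < 7)%N -> (k < 7)%N ->
  dft Y (e7 i) (e7 j) (inord k) 0 =
  Y@k,0 * brc (e7 i) (e7 j) 0 + Y@k,1 * brc (e7 i) (e7 j) 1 + Y@k,2 * brc (e7 i) (e7 j) 2
  + Y@k,3 * brc (e7 i) (e7 j) 3 + Y@k,4 * brc (e7 i) (e7 j) 4 + Y@k,5 * brc (e7 i) (e7 j) 5
  + Y@k,6 * brc (e7 i) (e7 j) 6 - (brc (Y *m e7 i) (e7 j) k + brc (e7 i) (Y *m e7 j) k).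
Proof.
move=> hi hj hk; rewrite /defect !mxE sum7 !br_coord !inordK //.
Qed.

Definition par (Y : 'M[R]_7) (k : nat) : R :=
  match k with 0 => Y@0,0 | 1 => Y@1,1 | 2 => Y@1,2 | 3 => Y@3,0 | 4 => Y@4,0 | 5 => Y@4,2
  | 6 => Y@5,0 | 7 => Y@5,1 | 8 => Y@5,2 | 9 => Y@6,3 | 10 => Y@6,4 | 11 => Y@6,5
  | 12 => Y@6,0 | 13 => Y@6,1 | _ => Y@6,2 end.

Ltac deq H E i j k :=
  have E := H (e7 i) (e7 j);
  move/(congr1 (fun v : 'cV[R]_7 => v (inord k) 0)): E => E;
  rewrite defE // mxE /brc /xs ?mulve // ?e7E //= in E.

Lemma param (Y : 'M[R]_7) : (forall x y, dft Y x y = 0) -> Y = mat (par Y).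
Proof.
move=> H.
deq H E010 0%N 1%N 0%N.
deq H E011 0%N 1%N 1%N.
deq H E012 0%N 1%N 2%N.
deq H E014 0%N 1%N 4%N.
deq H E016 0%N 1%N 6%N.
deq H E020 0%N 2%N 0%N.
deq H E021 0%N 2%N 1%N.
deq H E022 0%N 2%N 2%N.
deq H E024 0%N 2%N 4%N.
deq H E026 0%N 2%N 6%N.
deq H E030 0%N 3%N 0%N.
deq H E031 0%N 3%N 1%N.
deq H E032 0%N 3%N 2%N.
deq H E033 0%N 3%N 3%N.
deq H E120 1%N 2%N 0%N.
deq H E121 1%N 2%N 1%N.
deq H E122 1%N 2%N 2%N.
deq H E126 1%N 2%N 6%N.
deq H E154 1%N 5%N 4%N.
deq H E155 1%N 5%N 5%N.
deq H E013 0%N 1%N 3%N.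
deq H E046 0%N 4%N 6%N.
deq H E015 0%N 1%N 5%N.
deq H E146 1%N 4%N 6%N.
deq H E023 0%N 2%N 3%N.
deq H E056 0%N 5%N 6%N.
deq H E025 0%N 2%N 5%N.
deq H E123 1%N 2%N 3%N.
deq H E036 0%N 3%N 6%N.
deq H E156 1%N 5%N 6%N.
deq H E125 1%N 2%N 5%N.
deq H E136 1%N 3%N 6%N.
deq H E124 1%N 2%N 4%N.
deq H E236 2%N 3%N 6%N.
deq H E256 2%N 5%N 6%N.
have h01 : Y@0,1 = matf (par Y) 0 1 by rewrite /matf /par /=; clear -E125 E136; lra.
have h02 : Y@0,2 = matf (par Y) 0 2 by rewrite /matf /par /=; clear -E125 E136 E124 E236; lra.
have h03 : Y@0,3 = matf (par Y) 0 3 by rewrite /matf /par /=; clear -E120; lra.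
have h04 : Y@0,4 = matf (par Y) 0 4 by rewrite /matf /par /=; clear -E010; lra.
have h05 : Y@0,5 = matf (par Y) 0 5 by rewrite /matf /par /=; clear -E020; lra.
have h06 : Y@0,6 = matf (par Y) 0 6 by rewrite /matf /par /=; clear -E030; lra.
have h10 : Y@1,0 = matf (par Y) 1 0 by rewrite /matf /par /=; clear -E013 E046 E023 E056; lra.
have h13 : Y@1,3 = matf (par Y) 1 3 by rewrite /matf /par /=; clear -E121; lra.
have h14 : Y@1,4 = matf (par Y) 1 4 by rewrite /matf /par /=; clear -E011; lra.
have h15 : Y@1,5 = matf (par Y) 1 5 by rewrite /matf /par /=; clear -E021; lra.
have h16 : Y@1,6 = matf (par Y) 1 6 by rewrite /matf /par /=; clear -E031; lra.
have h20 : Y@2,0 = matf (par Y) 2 0 by rewrite /matf /par /=; clear -E013 E046; lra.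
have h21 : Y@2,1 = matf (par Y) 2 1 by rewrite /matf /par /=; clear -E025 E123 E036 E156; lra.
have h22 : Y@2,2 = matf (par Y) 2 2 by rewrite /matf /par /=; clear -E024 E025 E123 E036 E256; lra.
have h23 : Y@2,3 = matf (par Y) 2 3 by rewrite /matf /par /=; clear -E122; lra.
have h24 : Y@2,4 = matf (par Y) 2 4 by rewrite /matf /par /=; clear -E012; lra.
have h25 : Y@2,5 = matf (par Y) 2 5 by rewrite /matf /par /=; clear -E022; lra.
have h26 : Y@2,6 = matf (par Y) 2 6 by rewrite /matf /par /=; clear -E032; lra.
have h31 : Y@3,1 = matf (par Y) 3 1 by rewrite /matf /par /=; clear -E016; lra.
have h32 : Y@3,2 = matf (par Y) 3 2 by rewrite /matf /par /=; clear -E026; lra.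
have h33 : Y@3,3 = matf (par Y) 3 3 by rewrite /matf /par /=; clear -E024 E025 E123 E036 E256; lra.
have h34 : Y@3,4 = matf (par Y) 3 4 by rewrite /matf /par /=; clear -E013 E046; lra.
have h35 : Y@3,5 = matf (par Y) 3 5 by rewrite /matf /par /=; clear -E013 E046 E023 E056; lra.
have h36 : Y@3,6 = matf (par Y) 3 6 by rewrite /matf /par /=; clear -E033; lra.
have h41 : Y@4,1 = matf (par Y) 4 1 by rewrite /matf /par /=; clear -E126; lra.
have h43 : Y@4,3 = matf (par Y) 4 3 by rewrite /matf /par /=; clear -E125 E136 E124 E236; lra.
have h44 : Y@4,4 = matf (par Y) 4 4 by rewrite /matf /par /=; clear -E014; lra.
have h45 : Y@4,5 = matf (par Y) 4 5 by rewrite /matf /par /=; clear -E024; lra.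
have h46 : Y@4,6 = matf (par Y) 4 6 by rewrite /matf /par /=; clear -E020 E154; lra.
have h53 : Y@5,3 = matf (par Y) 5 3 by rewrite /matf /par /=; clear -E125 E136; lra.
have h54 : Y@5,4 = matf (par Y) 5 4 by rewrite /matf /par /=; clear -E146 E025 E123 E036 E156; lra.
have h55 : Y@5,5 = matf (par Y) 5 5 by rewrite /matf /par /=; clear -E024 E123 E036 E256; lra.
have h56 : Y@5,6 = matf (par Y) 5 6 by rewrite /matf /par /=; clear -E155; lra.
have h66 : Y@6,6 = matf (par Y) 6 6 by rewrite /matf /par /=; clear -E024 E025 E123 E036 E256; lra.
clear -h01 h02 h03 h04 h05 h06 h10 h13 h14 h15 h16 h20 h21 h22 h23 h24 h25 h26 h31 h32 h33 h34 h35 h36 h41 h43 h44 h45 h46 h53 h54 h55 h56 h66.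
apply/matrixP => a b.
case: a => a ha; case: b => b hb.
have -> : Ordinal ha = inord a by apply/val_inj; rewrite /= inordK.
have -> : Ordinal hb = inord b by apply/val_inj; rewrite /= inordK.
rewrite matE //.
do 7 (case: a ha => [|a] ha; [ do 7 (case: b hb => [|b] hb; [ first [reflexivity | assumption] | ]); by [] | ]).
by [].
Qed.

End Spec.

Section Spec3.
Variable R : realType.
Notation "Y @ a , b" := (Y (inord a) (inord b)) (at level 10, a at level 8, b at level 8).

Definition tor1 (k : nat) : R := (k == 0%N)%:R.
Definition tor2 (k : nat) : R := (k == 1%N)%:R.

Lemma trace7 (M : 'M[R]_7) : \tr M = M@0,0 + M@1,1 + M@2,2 + M@3,3 + M@4,4 + M@5,5 + M@6,6.
Proof. by rewrite /mxtrace sum7. Qed.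

Lemma mulE7 (M N : 'M[R]_7) a b : (M *m N) @ a, b =
  M@a,0 * N@0,b + M@a,1 * N@1,b + M@a,2 * N@2,b + M@a,3 * N@3,b + M@a,4 * N@4,b
  + M@a,5 * N@5,b + M@a,6 * N@6,b.
Proof. by rewrite mxE sum7. Qed.

Lemma scalE7 (c : R) a b : (a < 7)%N -> (b < 7)%N -> (c%:M : 'M[R]_7) @ a, b = c * (a == b)%:R.
Proof. by move=> ha hb; rewrite mxE inord_eq // mulr_natr. Qed.

Lemma addE7 (M N : 'M[R]_7) a b : (M + N) @ a, b = M@a,b + N@a,b.
Proof. by rewrite mxE. Qed.

Lemma tr_tor1 (c : R) t : \tr ((c%:M + mat t) *m mat tor1) = 4 * c + 4 * t 0%N + 4 * t 1%N.
Proof.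
rewrite trace7 !mulE7 !addE7 !scalE7 // !matE // /matf /tor1 /=.
ring.
Qed.

Lemma tr_tor2 (c : R) t : \tr ((c%:M + mat t) *m mat tor2) = 8 * c + 4 * t 0%N + 12 * t 1%N.
Proof.
rewrite trace7 !mulE7 !addE7 !scalE7 // !matE // /matf /tor2 /=.
ring.
Qed.

Lemma tr_all (c : R) t : \tr (c%:M + mat t) = 7 * c + 4 * t 0%N + 8 * t 1%N.
Proof.
rewrite trace7 !addE7 !scalE7 // !matE // /matf /=.
ring.
Qed.

Definition wpar (t : nat -> R) (c : R) (k : nat) : R :=
 match k with
 | 2 => 1
 | 4 => -2 * t 6%N / c
 | 5 => 2 * t 7%N / c - 4 * t 8%N / c + 2 * t 9%N / c + 8 * t 2%N * t 7%N / c ^+ 2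
 | 8 => 2 * t 7%N / c
 | 11 => 2 * t 10%N / c
 | 12 => -4 * t 10%N * t 6%N / c ^+ 2
 | 13 => -4 * t 10%N * t 7%N / c ^+ 2
 | 14 => t 13%N / c + (2 * t 10%N * t 7%N - 6 * t 10%N * t 8%N + 3 * t 10%N * t 9%N
          + 2 * t 11%N * t 7%N + t 6%N * t 9%N) / c ^+ 2 + 12 * t 10%N * t 2%N * t 7%N / c ^+ 3
 | _ => 0 end.

Lemma tr_w u t (c : R) : \tr (mat u *m mat (wpar t c)) = 0.
Proof.
rewrite trace7 !mulE7 !matE // /matf /wpar /=.
ring.
Qed.

Lemma w12 t (c : R) : mat (wpar t c) @ 1, 2 = 1.
Proof. by rewrite matE. Qed.

Lemma comm_w t (c : R) : c != 0 -> t 0%N = - c / 2 -> t 1%N = - c / 2 ->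
  mat t *m mat (wpar t c) = mat (wpar t c) *m mat t.
Proof.
move=> hc h0 h1.
apply/matrixP => a b.
case: a => a ha; case: b => b hb.
have -> : Ordinal ha = inord a by apply/val_inj; rewrite /= inordK.
have -> : Ordinal hb = inord b by apply/val_inj; rewrite /= inordK.
rewrite !mulE7 !matE //.
do 7 (case: a ha => [|a] ha; [ do 7 (case: b hb => [|b] hb; [ rewrite /matf /wpar /= ?h0 ?h1; field => // | ]); by [] | ]).
by [].
Qed.

End Spec3.

Section Main.
Variable R : realType.
Notation "Y @ a , b" := (Y (inord a) (inord b)) (at level 10, a at level 8, b at level 8).

Lemma n7_anti : forall i j : 'I_7, n7_const R j i = - n7_const R i j.
Proof.
move=> [i hi] [j hj]; rewrite /n7_const /=.
do 7 (case: i hi => [|i] hi; [do 7 (case: j hj => [|j] hj; [by rewrite ?oppr0 ?opprK | ]); by [] | ]).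
by [].
Qed.

Lemma tr_transport (n : nat) (B X Ric : 'M[R]_n) : B \in unitmx ->
  \tr ((invmx B *m Ric *m B) *m (invmx B *m X *m B)) = \tr (Ric *m X).
Proof.
move=> hB.
have -> : (invmx B *m Ric *m B) *m (invmx B *m X *m B) = invmx B *m (Ric *m X *m B).
  by rewrite -!mulmxA (mulmxA B) (mulmxV hB) mul1mx.
by rewrite mxtrace_mulC -!mulmxA (mulmxV hB) mulmx1.
Qed.

Lemma trB (n : nat) (A C : 'M[R]_n) : \tr (A - C) = \tr A - \tr C.
Proof. by rewrite linearB. Qed.

Lemma brzero (B : 'M[R]_7) : B \in unitmx ->
  (forall i j k, Tf (@n7_const R) B i j k = 0) -> False.
Proof.
move=> hB h.
have h0 : forall i j, n7_bracket (col i B) (col j B) = 0.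
  move=> i j; have e : invmx B *m n7_bracket (col i B) (col j B) = 0.
    by apply/matrixP => k l; rewrite (ord1 l) [RHS]mxE; exact: (h i j k).
  by rewrite -[n7_bracket _ _]mul1mx -(mulmxV hB) -mulmxA e mulmx0.
have hx : forall x : 'cV[R]_7, x = \sum_l (invmx B *m x) l 0 *: col l B.
  by move=> x; rewrite -mul_sum_col mulmxA (mulmxV hB) mul1mx.
have hz : n7_bracket (e7 R 0) (e7 R 1) = 0.
  rewrite /n7_bracket [e7 R 0]hx brL; apply: big1 => m _.
  rewrite [e7 R 1]hx brR big1 ?scaler0 // => l _.
  by rewrite -/(n7_bracket _ _) h0 scaler0.
have := congr1 (fun v : 'cV[R]_7 => v (inord 4) 0) hz.
rewrite br_coord inordK // /brc /xs /e7 !mxE !inord_eq //=.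
rewrite mul1r mul0r subr0 => /eqP; by rewrite oner_eq0.
Qed.


Lemma scal_conj (n : nat) (B : 'M[R]_n) (c : R) : B \in unitmx ->
  invmx B *m c%:M *m B = c%:M.
Proof. by move=> hB; rewrite mul_mx_scalar -scalemxAl (mulVmx hB) scalemx1. Qed.

Lemma comm_tr (n : nat) (Dp P : 'M[R]_n) : Dp *m P = P *m Dp ->
  \tr (Dp *m (P *m P^T - P^T *m P)) = 0.
Proof.
move=> h; rewrite mulmxBr trB.
have -> : \tr (Dp *m (P *m P^T)) = \tr (Dp *m (P^T *m P)).
  by rewrite mulmxA h -mulmxA mxtrace_mulC -mulmxA.
by rewrite subrr.
Qed.

End Main.

Theorem mainTheorem8 (R : realType) : ~ einstein_nilradical (@n7_bracket R).
Proof.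
move=> [B [hB [c [D [hD hRic]]]]].
have hanti := @n7_anti R.
pose g := invmx B.
pose T := Tf (@n7_const R) B.
have KT : forall A, \tr ((g *m (c%:M + D) *m B) *m A) = 1 / 4 * tdot (piA A T) T.
  by move=> A; apply: key_trace.
have trder : forall X, (forall x y, defect (@n7_const R) X x y = 0) ->
    \tr ((c%:M + D) *m X) = 0.
  move=> X hX; rewrite -(tr_transport _ _ hB) KT tdot_pz ?mulr0 //.
  exact: der_frame.
have hDd : forall x y, defect (@n7_const R) D x y = 0 by apply: defect_der.
have eD := param hDd.
set t := par D in eD.
have e1 := trder _ (@mat_der R (@tor1 R)).
have e2 := trder _ (@mat_der R (@tor2 R)).
rewrite eD tr_tor1 in e1.
rewrite eD tr_tor2 in e2.
have ht0 : t 0%N = - c / 2 by lra.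
have ht1 : t 1%N = - c / 2 by lra.
have hc : c != 0.
  apply/eqP => c0.
  have htr : \tr (c%:M + D) = c by rewrite eD tr_all ht0 ht1; field.
  have h1 := tr_transport 1%:M (c%:M + D) hB.
  rewrite !mulmx1 (mulVmx hB) mulmx1 in h1.
  have h2 := KT 1%:M.
  rewrite mulmx1 h1 htr tdot_pi_one c0 in h2.
  have h3 : tdot T T = 0 by lra.
  exact: (brzero hB (tdot_eq0 h3)).
pose w := wpar t c.
pose psi := mat w.
pose P := g *m psi *m B.
have hcomm : D *m psi = psi *m D by rewrite eD; apply: comm_w.
have hpz : piA P T = @tzero R 7.
  apply: functional_extensionality_dep => i; apply: functional_extensionality_dep => j.
  apply: functional_extensionality_dep => k.
  exact: (der_frame hB (@mat_der R w)).
have KP := pi_key hpz.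
pose Dp := g *m D *m B.
have hDP : Dp *m P = P *m Dp.
  rewrite /Dp /P -!mulmxA (mulmxA B g) (mulmxV hB) mul1mx.
  rewrite (mulmxA B g) (mulmxV hB) mul1mx.
  by rewrite !mulmxA -(mulmxA g D psi) hcomm !mulmxA.
have trA : \tr ((g *m (c%:M + D) *m B) *m (P *m P^T - P^T *m P)) = 0.
  have -> : g *m (c%:M + D) *m B = c%:M + Dp.
    by rewrite mulmxDr mulmxDl scal_conj.
  rewrite mulmxDl mxtraceD mul_scalar_mx mxtraceZ trB mxtrace_mulC subrr mulr0 add0r.
  exact: comm_tr.
rewrite KT KP in trA.
have hsq : tdot (piA P^T T) (piA P^T T) = 0 by lra.
have hz := tdot_eq0 hsq.
pose Y := B *m P^T *m g.
have hY : invmx B *m Y *m B = P^T.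
  by rewrite /Y !mulmxA (mulVmx hB) mul1mx -mulmxA (mulVmx hB) mulmx1.
have hYd : forall x y, defect (@n7_const R) Y x y = 0.
  apply: (frame_zero hB) => i j k; rewrite hY; exact: hz.
have eY := param hYd.
have htr0 : \tr (Y *m psi) = 0 by rewrite eY tr_w.
have htrP : \tr (Y *m psi) = \tr (P^T *m P).
  rewrite /Y /P -!mulmxA mxtrace_mulC -!mulmxA.
  by [].
have hP0 := tr_TA_eq0 (etrans (esym htrP) htr0).
have hpsi : psi = 0.
  have -> : psi = B *m P *m g by rewrite /P !mulmxA (mulmxV hB) mul1mx -mulmxA (mulmxV hB) mulmx1.
  by rewrite hP0 mulmx0 mul0mx.
have := w12 t c.
rewrite -/w -/psi hpsi mxE => /eqP.
by rewrite eq_sym oner_eq0.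
Qed.
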